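(* Let $\lambda\in\{1,2\}$ and let $u,t,v,w$ be integers such that: $(u,t)$ satisfies $S_{\lambda,1}$ and $u\cdot(vw)=t^3+t^{\lambda}+1$ (so $u,t,vw$ are consecutive terms of $\langle u,t\rangle_{S_{\lambda,1}}=\langle t,vw\rangle_{S_{2,\lambda}}$); $(v,t)$ satisfies $S_{\lambda,1}$ (so $v,t,uw$ are consecutive terms of $\langle v,t\rangle_{S_{\lambda,1}}=\langle t,uw\rangle_{S_{2,\lambda}}$); $|t|$ is a prime; and $t\nmid (u-v)$. Then $(-w,t)$ satisfies $S_{\lambda,1}$, so $-w,t,-uv$ are, in that order, three consecutive terms of a third 4-chain $\langle -w,t\rangle_{S_{\lambda,1}}=\langle t,-uv\rangle_{S_{2,\lambda}}$.
   Context: For $\lambda_a,\lambda_b\in\{1,2\}$, a pair of integers $(x,y)$ satisfies the system $S_{\lambda_a,\lambda_b}$ if $x\mid y^3+y^{\lambda_a}+1$ and $y\mid x^3+x^{\lambda_b}+1$. For such a pair, $\langle x,y\rangle_{S_{\lambda_a,\lambda_b}}$ denotes the bi-infinite integer sequence $(u_n)$ with $u_0=x$, $u_1=y$ and $u_{n-1}u_{n+1}=u_n^3+u_n^{e_n}+1$ for all $n$, where $e_n$ has period 4 with $(e_0,e_1,e_2,e_3)=(\lambda_b,\lambda_a,3-\lambda_b,3-\lambda_a)$; sequences are identified up to shift and reversal of indices. ''$u,t,s$, in that order, are three consecutive terms of $\langle u,t\rangle_{S_{\lambda_a,\lambda_b}}$'' means $(u,t)$ satisfies $S_{\lambda_a,\lambda_b}$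 and $us=t^3+t^{\lambda_a}+1$. *)

(* Defs.v *)
From Stdlib Require Export ZArith Znumtheory.
Open Scope Z_scope.

Definition satisfiesS (la lb : Z) (x y : Z) : Prop :=
  (x | y ^ 3 + y ^ la + 1) /\ (y | x ^ 3 + x ^ lb + 1).

(* Main.v *)
Require Import Defs.
From Stdlib Require Import ZArith Znumtheory Lia.
Open Scope Z_scope.

Lemma pdiv (t a b : Z) : prime (Z.abs t) -> (t | a * b) -> (t | a) \/ (t | b).
Proof.
  intros Hp H. apply Z.divide_abs_l in H.
  destruct (prime_mult _ Hp _ _ H) as [H1|H1]; [left|right];
  apply Z.divide_abs_l; exact H1.
Qed.

Theorem theorem12 (lam u t v w : Z) :
  (lam = 1 \/ lam = 2) ->
  satisfiesS lam 1 u t ->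
  u * (v * w) = t ^ 3 + t ^ lam + 1 ->
  satisfiesS lam 1 v t ->
  prime (Z.abs t) ->
  ~ (t | u - v) ->
  satisfiesS lam 1 (- w) t /\ (- w) * (- (u * v)) = t ^ 3 + t ^ lam + 1.
Proof.
  intros Hl [_ HA] HN [_ HB] Hp Huv.
  rewrite Z.pow_1_r in HA, HB.
  assert (HN1 : (t | u * v * w - 1)).
  { destruct Hl; subst lam; [exists (t^2 + 1) | exists (t^2 + t)]; lia. }
  assert (HQ : (t | u^2 + u*v + v^2 + 1)).
  { destruct (pdiv t (u - v) (u^2 + u*v + v^2 + 1) Hp) as [H|H]; try tauto.
    replace ((u - v) * (u^2 + u*v + v^2 + 1)) with ((u^3+u+1) - (v^3+v+1)) by ring.
    apply Z.divide_sub_r; assumption. }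
  assert (HC : (t | u*v*(u+v) - 1)).
  { replace (u*v*(u+v) - 1) with (u * (u^2 + u*v + v^2 + 1) - (u^3+u+1)) by ring.
    apply Z.divide_sub_r; [apply Z.divide_mul_r|]; assumption. }
  assert (Hnot1 : ~ (t | 1)).
  { intro H. apply Z.divide_abs_l in H. apply Z.divide_1_r in H.
    destruct Hp as [Hp _]. lia. }
  assert (Hw : (t | w - (u + v))).
  { assert (H : (t | u * v * (w - (u+v)))).
    { replace (u * v * (w - (u+v))) with ((u*v*w - 1) - (u*v*(u+v) - 1)) by ring.
      apply Z.divide_sub_r; assumption. }
    destruct (pdiv t (u*v) _ Hp H) as [H1|H1]; [|exact H1].
    exfalso. apply Hnot1.
    replace 1 with (w * (u*v) - (u*v*w - 1)) by ring.
    apply Z.divide_sub_r; [apply Z.divide_mul_r|]; assumption. }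
  destruct Hw as [k Hk].
  split; [split|].
  - exists (- (u * v)). rewrite <- HN. ring.
  - rewrite Z.pow_1_r.
    assert (Hw' : w = u + v + k * t) by lia. subst w.
    replace ((- (u + v + k * t)) ^ 3 + - (u + v + k * t) + 1) with
      (-((u^3+u+1) + (v^3+v+1) + 3 * (u*v*(u+v) - 1))
       - t * (k * (3*(u+v)^2 + 1) + 3*(u+v)*k^2*t + k^3*t^2)) by ring.
    apply Z.divide_sub_r.
    + apply Z.divide_opp_r. apply Z.divide_add_r; [apply Z.divide_add_r|]; try assumption.
      destruct HC as [c Hc]. exists (3*c). rewrite Hc. ring.
    + apply Z.divide_factor_l.
  - rewrite <- HN. ring.
Qed.
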